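(* Let $f \colon Q \twoheadrightarrow Q'$ be a partial surjection between finite sets and $A$ a simple type. Then $D_Q(A)$ is contained in the domain of the partial function $[\![A]\!]_f$, and the restriction of $[\![A]\!]_f$ to $D_Q(A)$ is the unique function $p_{Q,Q'} \colon D_Q(A) \to D_{Q'}(A)$ satisfying $p_{Q,Q'}([\![M]\!]_Q) = [\![M]\!]_{Q'}$ for all $M \in \Lambda(A)$; in particular $p_{Q,Q'}$ is surjective.
   Context: Simple types are generated from a base type $o$ by $\Rightarrow$; $\Lambda(A)$ is the set of closed simply typed $\lambda$-terms of type $A$ modulo $\beta\eta$. For a finite set $Q$: $[\![o]\!]_Q = Q$, $[\![A\Rightarrow B]\!]_Q$ = all functions $[\![A]\!]_Q \to [\![B]\!]_Q$, and $[\![M]\!]_Q$ is the standard interpretation. $D_Q(A) = \{[\![M]\!]_Q : M \in \Lambda(A)\}$. For $R \subseteq Q\times Q'$, the logical relation $[\![A]\!]_R \subseteq [\![A]\!]_Q \times [\![A]\!]_{Q'}$ is given by $[\![o]\!]_R = R$ and $[\![A\Rightarrow B]\!]_R = \{(g,h) : \forall (x,y)\in[\![A]\!]_R,\ (g(x),h(y))\in[\![B]\!]_R\}$. A partial surjection $f \colon Q \twoheadrightarrow Q'$ is a relation that is the graph of a partial function surjective onto $Q'$; it is a standard fact (which may be used) that then $[\![A]\!]_f$ is also a partial surjection. *)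

(* Defs.v *)
From mathcomp Require Import all_boot.
Set Implicit Arguments.
Unset Strict Implicit.
Unset Printing Implicit Defensive.

Inductive ty : Type := o : ty | arr : ty -> ty -> ty.

Inductive var : list ty -> ty -> Type :=
| vz : forall G A, var (A :: G) A
| vs : forall G A B, var G A -> var (B :: G) A.

Inductive tm : list ty -> ty -> Type :=
| tvar : forall G A, var G A -> tm G A
| tlam : forall G A B, tm (A :: G) B -> tm G (arr A B)
| tapp : forall G A B, tm G (arr A B) -> tm G A -> tm G B.

(* Closed terms of type A (Lambda(A) is this modulo beta-eta). *)
Definition closed_tm (A : ty) := tm nil A.

Fixpoint sem (Q : finType) (A : ty) : Type :=
  match A with
  | o => Q
  | arr A B => sem Q A -> sem Q B
  end.

Fixpoint env (Q : finType) (G : list ty) : Type :=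
  match G with
  | nil => unit
  | A :: G => (sem Q A * env Q G)%type
  end.

Fixpoint lookup (Q : finType) G A (x : var G A) : env Q G -> sem Q A :=
  match x in var G A return env Q G -> sem Q A with
  | vz _ _ => fun e => fst e
  | vs _ _ _ x => fun e => lookup x (snd e)
  end.

Fixpoint eval (Q : finType) G A (M : tm G A) : env Q G -> sem Q A :=
  match M in tm G A return env Q G -> sem Q A with
  | tvar _ _ x => fun e => lookup x e
  | tlam _ _ _ M => fun e => fun a => eval M (a, e)
  | tapp _ _ _ M N => fun e => (eval M e) (eval N e)
  end.

Definition interp (Q : finType) A (M : closed_tm A) : sem Q A := eval M tt.

Definition D (Q : finType) (A : ty) (x : sem Q A) : Prop :=
  exists M : closed_tm A, x = interp Q M.

Fixpoint lrel (Q Q' : finType) (R : Q -> Q' -> Prop) (A : ty)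
  : sem Q A -> sem Q' A -> Prop :=
  match A return sem Q A -> sem Q' A -> Prop with
  | o => fun x y => R x y
  | arr A B => fun g h =>
      forall x y, @lrel Q Q' R A x y -> @lrel Q Q' R B (g x) (h y)
  end.

Definition partial_surjection (Q Q' : finType) (R : Q -> Q' -> Prop) : Prop :=
  (forall x y y', R x y -> R x y' -> y = y') /\ (forall y, exists x, R x y).

Arguments lrel {Q Q'} R A _ _.
Arguments interp Q {A} M.
Arguments D {Q A} x.

(* Main.v *)
Require Import Defs.
From mathcomp Require Import all_boot.
From Stdlib Require Import Classical IndefiniteDescription FunctionalExtensionality ProofIrrelevance.

Section S.
Variables (Q Q' : finType) (f : Q -> Q' -> Prop).

Fixpoint env_rel (G : list ty) : env Q G -> env Q' G -> Prop :=
  match G return env Q G -> env Q' G -> Prop with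
  | nil => fun _ _ => True
  | A :: G => fun e e' => lrel f A (fst e) (fst e') /\ env_rel G (snd e) (snd e')
  end.

Lemma lookup_rel G A (x : var G A) : forall e e', env_rel G e e' ->
  lrel f A (lookup x e) (lookup x e').
Proof.
  induction x as [G A|G A B x IH]; simpl; intros e e' H.
  - exact (proj1 H).
  - apply IH. exact (proj2 H).
Qed.

Lemma eval_rel G A (M : tm G A) : forall e e', env_rel G e e' ->
  lrel f A (eval M e) (eval M e').
Proof.
  induction M as [G A x|G A B M IH|G A B M IHM N IHN]; simpl; intros e e' H.
  - apply lookup_rel; exact H.
  - intros a a' Ha. apply IH. simpl. split; assumption.
  - apply IHM; [exact H| apply IHN; exact H].
Qed.

Lemma fundamental A (M : closed_tm A) : lrel f A (interp Q M) (interp Q' M).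
Proof. apply eval_rel. simpl. exact I. Qed.
End S.

Lemma inh_Q (Q : finType) (q : Q) A : inhabited (sem Q A).
Proof.
  induction A as [|A IHA B IHB]; simpl.
  - exact (inhabits q).
  - destruct IHB as [b]. exact (inhabits (fun _ => b)).
Qed.

Lemma inh_arr (Q : finType) A B :
  inhabited (sem Q (arr A B)) <-> (inhabited (sem Q A) -> inhabited (sem Q B)).
Proof.
  simpl; split.
  - intros [g] [a]. exact (inhabits (g a)).
  - intros H. destruct (classic (inhabited (sem Q A))) as [HA|HA].
    + destruct (H HA) as [b]. exact (inhabits (fun _ => b)).
    + apply inhabits. intro a. exfalso. apply HA. exact (inhabits a).
Qed.

Lemma inh_transport (Q Q' : finType) (e : Q -> False) (e' : Q' -> False) A :
  inhabited (sem Q A) <-> inhabited (sem Q' A).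
Proof.
  induction A as [|A IHA B IHB].
  - simpl; split; intros [x]; exfalso; [exact (e x)|exact (e' x)].
  - rewrite (@inh_arr Q A B) (@inh_arr Q' A B). tauto.
Qed.

Lemma default_elt (Q Q' : finType) (f : Q -> Q' -> Prop)
  (hf : partial_surjection f) A B (x : sem Q A) (h : sem Q' (arr A B)) :
  inhabited (sem Q B).
Proof.
  destruct (classic (inhabited Q)) as [[q]|HQ].
  - exact (@inh_Q Q q B).
  - assert (e : Q -> False) by (intro q; apply HQ; exact (inhabits q)).
    assert (e' : Q' -> False).
    { intro y. destruct (proj2 hf y) as [q _]. exact (e q). }
    apply (@inh_transport Q Q' e e' _).
    assert (HA : inhabited (sem Q' A)) by (apply (@inh_transport Q Q' e e' _); exact (inhabits x)).
    destruct HA as [a]. exact (inhabits (h a)).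
Qed.

Lemma lrel_psurj (Q Q' : finType) (f : Q -> Q' -> Prop)
  (hf : partial_surjection f) A :
  (forall x y y', lrel f A x y -> lrel f A x y' -> y = y') /\
  (forall y, exists x, lrel f A x y).
Proof.
  induction A as [|A [FA SA] B [FB SB]].
  - exact hf.
  - split.
    + simpl. intros g h h' H1 H2. apply functional_extensionality. intro y.
      destruct (SA y) as [x Hx]. apply (FB (g x)); auto.
    + simpl. intro h.
      assert (Hz : forall x : sem Q A, exists z : sem Q B,
                 forall y, lrel f A x y -> lrel f B z (h y)).
      { intro x. destruct (classic (exists y, lrel f A x y)) as [[y Hy]|Hn].
        - destruct (SB (h y)) as [z Hz]. exists z. intros y' Hy'.
          rewrite (FA x y' y Hy' Hy). exact Hz.
        - destruct (@default_elt Q Q' f hf A B x h) as [z]. exists z. intros y Hy.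
          exfalso; apply Hn; exists y; exact Hy. }
      exists (fun x => proj1_sig (constructive_indefinite_description _ (Hz x))).
      intros x y Hxy.
      exact (proj2_sig (constructive_indefinite_description _ (Hz x)) y Hxy).
Qed.

Theorem mainTheorem6 (Q Q' : finType) (f : Q -> Q' -> Prop)
  (hf : partial_surjection f) (A : ty) :
  (* D_Q(A) is contained in the domain of [[A]]_f *)
  (forall x : sem Q A, D x -> exists y, lrel f A x y) /\
  (* the restriction of [[A]]_f to D_Q(A) is a function p : D_Q(A) -> D_Q'(A) *)
  (exists p : {x : sem Q A | D x} -> {y : sem Q' A | D y},
     (forall (x : {x : sem Q A | D x}) (y : sem Q' A),
         lrel f A (proj1_sig x) y <-> y = proj1_sig (p x)) /\
     (* p([[M]]_Q) = [[M]]_Q' for all M *)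
     (forall (M : closed_tm A) (h : D (interp Q M)),
         proj1_sig (p (exist _ (interp Q M) h)) = interp Q' M) /\
     (* p is the unique such function *)
     (forall p' : {x : sem Q A | D x} -> {y : sem Q' A | D y},
         (forall (M : closed_tm A) (h : D (interp Q M)),
             proj1_sig (p' (exist _ (interp Q M) h)) = interp Q' M) ->
         forall x, proj1_sig (p' x) = proj1_sig (p x)) /\
     (* in particular p is surjective *)
     (forall y : {y : sem Q' A | D y}, exists x, proj1_sig (p x) = proj1_sig y)).
Proof.
  destruct (@lrel_psurj Q Q' f hf A) as [FA _].
  split.
  { intros x [M ->]. exists (interp Q' M). apply (@fundamental Q Q' f). }
  set (pick := fun x : {x : sem Q A | D x} =>
         constructive_indefinite_description _ (proj2_sig x)).
  assert (HD : forall x : {x : sem Q A | D x}, D (interp Q' (proj1_sig (pick x))))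
    by (intro x; exists (proj1_sig (pick x)); reflexivity).
  exists (fun x => exist _ (interp Q' (proj1_sig (pick x))) (HD x)).
  assert (Hrel : forall x : {x : sem Q A | D x},
             lrel f A (proj1_sig x) (interp Q' (proj1_sig (pick x)))).
  { intro x. destruct (pick x) as [M HM]. simpl. rewrite HM.
    apply (@fundamental Q Q' f). }
  assert (Hiff : forall (x : {x : sem Q A | D x}) (y : sem Q' A),
             lrel f A (proj1_sig x) y <-> y = interp Q' (proj1_sig (pick x))).
  { intros x y. split.
    - intro H. exact (FA _ _ _ H (Hrel x)).
    - intros ->. apply Hrel. }
  assert (Hval : forall (M : closed_tm A) (h : D (interp Q M)),
             interp Q' (proj1_sig (pick (exist _ (interp Q M) h))) = interp Q' M).
  { intros M h. symmetry. apply (Hiff (exist _ (interp Q M) h)). simpl.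
    apply (@fundamental Q Q' f). }
  simpl. split; [exact Hiff|]. split; [exact Hval|]. split.
  - intros p' Hp' [x hx]. destruct hx as [M HM] eqn:Ehx. subst x.
    rewrite Hp'. symmetry. apply Hval.
  - intros [y [M ->]]. simpl.
    assert (h : D (interp Q M)) by (exists M; reflexivity).
    exists (exist _ (interp Q M) h). simpl. apply Hval.
Qed.
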